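(* For each $n\in\mathbf{N}$, let $\mathcal{X}_n=\{1,\dots,n\}$, fix a chair preference $\succ$ (a ranking) on $\mathcal{X}_n$, and let $R^n$ (respectively $\mathrel{W}^n$) be a uniform random draw from the set of all rankings (respectively tournaments) on $\mathcal{X}_n$, with $R^n$ and $\mathrel{W}^n$ independent. Then $$\Pr\left(R^n \text{ is } \mathrel{W}^n\text{-unimprovable}\ \middle|\ R^n \text{ is } \mathrel{W}^n\text{-feasible}\right)\to 0\quad\text{as } n\to\infty.$$
   Context: A proto-ranking is an irreflexive transitive relation; a ranking is a total proto-ranking; a tournament is a total asymmetric relation on $\mathcal{X}_n$. Interaction: given a tournament $\mathrel{W}$, start from $R_0=\varnothing$; in each period with $R_{t-1}$ not total the chair offers a pair $\{x,y\}$ unranked by $R_{t-1}$, the winner is $x$ if $x\mathrel{W}y$ and $y$ otherwise, and $R_t$ is the transitive closure of $R_{t-1}\cup\{(\text{winner},\text{loser})\}$; stop when $R_t$ is total. A strategy assigns to each non-terminal history a pair unranked at it; its outcome under $\mathrel{W}$ is the final ranking. A ranking is $\mathrel{W}$-feasible if it is the outcome under $\mathrel{W}$ of some strategy. $R$ is more aligned with $\succ$ than $R'$ if for all $x\succ y$, $xR'y$ implies $xRy$; a ranking is $\mathrel{W}$-unimprovable if no other $\mathrel{W}$-feasible ranking is more aligned with $\succ$. *)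

(* Defs.v *)
From mathcomp Require Import all_boot all_order all_algebra.
From Stdlib Require Import ClassicalEpsilon.
Set Implicit Arguments. Unset Strict Implicit. Unset Printing Implicit Defensive.
Import Order.TTheory GRing.Theory Num.Theory.

Definition decP (P : Prop) : bool :=
  if excluded_middle_informative P then true else false.

(* Binary relations on a finite type T are represented as sets of pairs:
   x R y  <->  (x, y) \in R. *)
Section Rels.
Variable T : finType.

Definition irreflexiveb (R : {set T * T}) : bool := [forall x, (x, x) \notin R].
Definition transitiveb (R : {set T * T}) : bool :=
  [forall x, forall y, forall z, ((x, y) \in R) && ((y, z) \in R) ==> ((x, z) \in R)].
Definition totalb (R : {set T * T}) : bool :=
  [forall x, forall y, (x != y) ==> ((x, y) \in R) || ((y, x) \in R)].
Definition asymmetricb (R : {set T * T}) : bool :=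
  [forall x, forall y, ((x, y) \in R) ==> ((y, x) \notin R)].

Definition proto_ranking (R : {set T * T}) : bool := irreflexiveb R && transitiveb R.
Definition ranking (R : {set T * T}) : bool := proto_ranking R && totalb R.
Definition tournament (W : {set T * T}) : bool := totalb W && asymmetricb W.

Definition unranked (R : {set T * T}) (x y : T) : bool :=
  [&& x != y, (x, y) \notin R & (y, x) \notin R].

Definition tclosure (E : seq (T * T)) : {set T * T} :=
  [set p | [exists z, ((p.1, z) \in E) && connect (fun a b => (a, b) \in E) z p.2]].

(* A history is the list of (winner, loser) results so far; R_t is the
   transitive closure of these results. A strategy maps histories to pairs. *)
Definition strategy := seq (T * T) -> T * T.

Definition valid_strategy (s : strategy) : Prop :=
  forall h : seq (T * T), ~~ totalb (tclosure h) -> unranked (tclosure h) (s h).1 (s h).2.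

Definition step (W : {set T * T}) (s : strategy) (h : seq (T * T)) : seq (T * T) :=
  if totalb (tclosure h) then h
  else let x := (s h).1 in let y := (s h).2 in
       rcons h (if (x, y) \in W then (x, y) else (y, x)).

(* The interaction stops after at most #|T|(#|T|-1)/2 periods (each period ranks a
   new pair); running #|T|*#|T| periods (with stopping) thus reaches the end. *)
Definition outcome (W : {set T * T}) (s : strategy) : {set T * T} :=
  tclosure (iter (#|T| * #|T|) (step W s) [::]).

Definition feasible (W R : {set T * T}) : Prop :=
  exists s : strategy, valid_strategy s /\ outcome W s = R.

Definition more_aligned (pref R R' : {set T * T}) : Prop :=
  forall x y, (x, y) \in pref -> (x, y) \in R' -> (x, y) \in R.

Definition unimprovable (pref W R : {set T * T}) : Prop :=
  ~ (exists R' : {set T * T}, R' <> R /\ feasible W R' /\ more_aligned pref R' R).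

End Rels.

Local Open Scope ring_scope.

(* Pr(R is W-unimprovable | R is W-feasible) for R, W independent uniform
   over rankings, resp. tournaments, on 'I_n (= X_n). *)
Definition cond_prob (n : nat) (pref : {set 'I_n * 'I_n}) : rat :=
  (#|[set p : {set 'I_n * 'I_n} * {set 'I_n * 'I_n} |
        [&& ranking p.1, tournament p.2, decP (feasible p.2 p.1)
          & decP (unimprovable pref p.2 p.1)]]|%:R)
  / (#|[set p : {set 'I_n * 'I_n} * {set 'I_n * 'I_n} |
        [&& ranking p.1, tournament p.2 & decP (feasible p.2 p.1)]]|%:R).

(* Main.v *)
Require Import Defs.
From mathcomp Require Import all_boot all_order all_algebra.
From mathcomp Require Import all_fingroup zify.
From Stdlib Require Import ClassicalEpsilon.
Import Order.TTheory GRing.Theory Num.Theory.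
Set Implicit Arguments. Unset Strict Implicit. Unset Printing Implicit Defensive.

Section Gen.
Variable T : finType.
Implicit Types (R W : {set T * T}) (h : seq (T * T)).

Lemma decPE (P : Prop) : Defs.decP P = true <-> P.
Proof. rewrite /Defs.decP; case: (ClassicalEpsilon.excluded_middle_informative P) => //. Qed.

Lemma trP R x y z : transitiveb R -> (x, y) \in R -> (y, z) \in R -> (x, z) \in R.
Proof.
move=> /forallP H xy yz; move: (H x) => /forallP /(_ y) /forallP /(_ z) /implyP.
by apply; rewrite xy yz.
Qed.

Lemma irrP R : irreflexiveb R -> forall x, (x, x) \notin R.
Proof. by move=> /forallP. Qed.

Lemma totP R : totalb R -> forall x y, x != y -> ((x, y) \in R) || ((y, x) \in R).
Proof. by move=> /forallP H x y; move: (H x) => /forallP /(_ y) /implyP. Qed.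

Lemma asymP R : asymmetricb R -> forall x y, (x, y) \in R -> (y, x) \notin R.
Proof. by move=> /forallP H x y; move: (H x) => /forallP /(_ y) /implyP. Qed.

Lemma ranking_asym R : ranking R -> forall x y, (x, y) \in R -> (y, x) \notin R.
Proof.
case/andP=> /andP [ir tr] _ x y xy; apply/negP => yx.
by move: (irrP ir x); rewrite (trP tr xy yx).
Qed.

Lemma mem_tcl h x y : ((x, y) \in tclosure h) =
  [exists z, ((x, z) \in h) && connect (fun a b => (a, b) \in h) z y].
Proof. by rewrite inE. Qed.

Lemma sub_tcl h p : p \in h -> p \in tclosure h.
Proof.
case: p => x y hp; rewrite mem_tcl; apply/existsP; exists y; by rewrite hp connect0.
Qed.

Lemma tcl_trans h x y z : (x, y) \in tclosure h -> (y, z) \in tclosure h -> (x, z) \in tclosure h.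
Proof.
rewrite !mem_tcl => /existsP [w /andP [xw wy]] /existsP [u /andP [yu uz]].
apply/existsP; exists w; rewrite xw /=.
apply: connect_trans wy _; apply: connect_trans uz; exact: connect1.
Qed.

Lemma conn_sub h R : {subset h <= R} -> transitiveb R ->
  forall z y, connect (fun a b => (a, b) \in h) z y -> z = y \/ (z, y) \in R.
Proof.
move=> sub tr z y /connectP [p]; elim: p z => [|w p IH] z /=; first by move=> _ ->; left.
move=> /andP [zw pw] ey; right; case: (IH w pw ey) => [<-|wy]; first exact: sub.
exact: trP tr (sub _ zw) wy.
Qed.

Lemma tcl_sub h R : {subset h <= R} -> transitiveb R -> forall p, p \in tclosure h -> p \in R.
Proof.
move=> sub tr [x y]; rewrite mem_tcl => /existsP [z /andP [xz zy]].
case: (conn_sub sub tr zy) => [<-|zy']; first exact: sub.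
exact: trP tr (sub _ xz) zy'.
Qed.

Lemma iter_in_W W s k : valid_strategy s -> tournament W ->
  {subset iter k (step W s) [::] <= W}.
Proof.
move=> vs /andP [tot _]; elim: k => [|k IH] //= p.
rewrite {1}/step; case: ifP => [_|nt]; first exact: IH.
rewrite mem_rcons inE => /orP [/eqP ->|]; last exact: IH.
have := vs _ (negbT nt); case/and3P => ne _ _.
case: ifP => // nxy; case/orP: (totP tot ne) => //; by rewrite nxy.
Qed.

End Gen.

Section Perm.
Variable n : nat.
Implicit Types (r : {perm 'I_n}) (R W : {set 'I_n * 'I_n}) (h : seq ('I_n * 'I_n)).

Definition rel_of r : {set 'I_n * 'I_n} := [set p | (r^-1)%g p.1 < (r^-1)%g p.2].

Lemma rel_ofE r i j : ((r i, r j) \in rel_of r) = (i < j).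
Proof. by rewrite inE /= !permK. Qed.

Lemma rel_of_mem r x y : ((x, y) \in rel_of r) = ((r^-1)%g x < (r^-1)%g y).
Proof. by rewrite inE. Qed.

Lemma rel_of_trans r : transitiveb (rel_of r).
Proof.
apply/forallP=> x; apply/forallP=> y; apply/forallP=> z; apply/implyP.
rewrite !rel_of_mem => /andP [a b]; exact: ltn_trans a b.
Qed.

Lemma rel_of_ranking r : ranking (rel_of r).
Proof.
apply/andP; split; [apply/andP; split|]; last first.
- apply/forallP=> x; apply/forallP=> y; apply/implyP=> ne; rewrite !rel_of_mem.
  have: (r^-1)%g x != (r^-1)%g y by apply: contra ne => /eqP /perm_inj ->.
  by rewrite neq_ltn.
- exact: rel_of_trans.
- by apply/forallP=> x; rewrite rel_of_mem ltnn.
Qed.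

Definition Cb r (p : 'I_n * 'I_n) :=
  [exists q : 'I_n * 'I_n, (val q.2 == (val q.1).+1) && (p == (r q.1, r q.2))].

Definition cstrat r (t0 : 'I_n) : strategy 'I_n := fun h =>
  if [pick q : 'I_n * 'I_n | (val q.2 == (val q.1).+1) && unranked (tclosure h) (r q.1) (r q.2)]
  is Some q then (r q.1, r q.2)
  else odflt (t0, t0) [pick p : 'I_n * 'I_n | unranked (tclosure h) p.1 p.2].

Lemma cstrat_valid r t0 : valid_strategy (cstrat r t0).
Proof.
move=> h nt; rewrite /cstrat; case: pickP => [q /andP [_ u] //|_].
case: pickP => [p //|none] /=; exfalso; move: nt => /negP; apply.
apply/forallP=> x; apply/forallP=> y; apply/implyP=> ne.
move: (none (x, y)); rewrite /unranked /= ne /=; by case: (_ \in _); case: (_ \in _).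
Qed.

Lemma Cb_sub r h : all (Cb r) h -> {subset h <= rel_of r}.
Proof.
move=> /allP H p /H /existsP [q /andP [/eqP e /eqP ->]].
by rewrite rel_ofE; move: e => /= ->.
Qed.

Lemma chain r h : all (Cb r) h ->
  (forall q : 'I_n * 'I_n, val q.2 = (val q.1).+1 -> (r q.1, r q.2) \in tclosure h) ->
  forall d (i k : 'I_n), val k = val i + d.+1 -> (r i, r k) \in tclosure h.
Proof.
move=> hC hq; elim=> [|d IH] i k e; first by apply: (hq (i, k)); rewrite /= e addn1.
have lt : val i + d.+1 < n by have := ltn_ord k; rewrite e; lia.
apply: tcl_trans (IH i (Ordinal lt) erefl) _.
by apply: (hq (Ordinal lt, k)); rewrite /= e !addnS.
Qed.

Lemma pick_some r h : all (Cb r) h -> ~~ totalb (tclosure h) ->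
  exists q : 'I_n * 'I_n, ((val q.2 == (val q.1).+1) && unranked (tclosure h) (r q.1) (r q.2)).
Proof.
move=> hC nt; apply/existsP; apply: contraR nt => /existsPn none.
have hq : forall q : 'I_n * 'I_n, val q.2 = (val q.1).+1 -> (r q.1, r q.2) \in tclosure h.
  move=> q e; move: (none q); rewrite e eqxx /= /unranked.
  have ne : r q.1 != r q.2 by apply/eqP => /perm_inj eq; move: e; rewrite eq; lia.
  rewrite ne /=; case: (boolP (_ \in _)) => // _; case: (boolP (_ \in _)) => //= H _.
  have := tcl_sub (Cb_sub hC) (rel_of_trans r) H; rewrite rel_ofE; move: e => /= ->; by rewrite ltnNge leqnSn.
apply/forallP=> x; apply/forallP=> y; apply/implyP=> ne.
have ne' : (r^-1)%g x != (r^-1)%g y by apply: contra ne => /eqP /perm_inj ->.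
case: (ltngtP ((r^-1)%g x) ((r^-1)%g y)) => [lt|lt|eq]; last by move: ne'; rewrite (val_inj eq) eqxx.
- have := chain hC hq (d := (val ((r^-1)%g y) - val ((r^-1)%g x)).-1) (i := (r^-1)%g x) (k := (r^-1)%g y).
  rewrite !permKV => -> //; rewrite prednK ?subn_gt0 // subnKC //; exact: ltnW.
- have := chain hC hq (d := (val ((r^-1)%g x) - val ((r^-1)%g y)).-1) (i := (r^-1)%g y) (k := (r^-1)%g x).
  rewrite !permKV => -> //; first by rewrite orbT.
  rewrite prednK ?subn_gt0 // subnKC //; exact: ltnW.
Qed.


Lemma cstrat_inv r W t0 : (forall i j : 'I_n, val j = (val i).+1 -> (r i, r j) \in W) ->
  forall k, let h := iter k (step W (cstrat r t0)) [::] in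
  [&& uniq h, all (Cb r) h & totalb (tclosure h) || (size h == k)].
Proof.
move=> hW; elim=> [|k IH]; first by rewrite /= orbT.
move: IH => /=; set h := iter k _ _ => /and3P [u a ts].
rewrite /step -/h; case: ifP => tot; first by rewrite u a tot.
move: ts; rewrite tot /= => /eqP sz.
rewrite /cstrat; case: pickP => [q /andP [e un] | none]; last first.
  by case: (pick_some a (negbT tot)) => q; rewrite none.
rewrite (hW _ _ (eqP e)) rcons_uniq all_rcons size_rcons sz eqxx orbT u a !andbT /=.
apply/andP; split.
  apply: contraTN un => hin; by rewrite /unranked (sub_tcl hin) /= andbF.
by apply/existsP; exists q; rewrite e eqxx.
Qed.

Lemma feasible_if r W (t0 : 'I_n) : (forall i j : 'I_n, val j = (val i).+1 -> (r i, r j) \in W) ->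
  feasible W (rel_of r).
Proof.
move=> hW; exists (cstrat r t0); split; first exact: cstrat_valid.
rewrite /outcome; have := cstrat_inv t0 hW (#|'I_n| * #|'I_n|).
set h := iter _ _ _ => /and3P [u a ts].
have tot : totalb (tclosure h).
  case/orP: ts => // /eqP sz; exfalso.
  have : #|h| <= #|predC1 (t0, t0)|.
    apply: subset_leq_card; apply/subsetP => p hp; rewrite !inE.
    move/allP: a => /(_ p hp) /existsP [q /andP [/eqP e /eqP ->]].
    apply/eqP => [[e1 e2]]; move: e; rewrite (perm_inj (etrans e1 (esym e2))); lia.
  rewrite cardC1 card_prod (card_uniqP u) sz.
  have : 0 < #|'I_n| by apply/card_gt0P; exists t0.
  by case: #|'I_n| => // m _ /=; lia.
apply/setP => [[x y]]; apply/idP/idP; first exact: tcl_sub (Cb_sub a) (rel_of_trans r) (x, y).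
move=> xy; have ne : x != y by apply: contraTneq xy => ->; rewrite rel_of_mem ltnn.
case/orP: (totP tot ne) => // yx.
have := tcl_sub (Cb_sub a) (rel_of_trans r) yx.
by have := ranking_asym (rel_of_ranking r) xy => /negbTE ->.
Qed.

End Perm.

Section Rank.
Variable n : nat.
Implicit Types (r : {perm 'I_n}) (R W : {set 'I_n * 'I_n}) (h : seq ('I_n * 'I_n)).

Definition rk R (x : 'I_n) := #|[set y | (y, x) \in R]|.

Lemma card_lt_ord (k : nat) : k <= n -> #|[pred i : 'I_n | i < k]| = k.
Proof.
move=> kn; rewrite -sum1_card (big_ord_narrow kn) /=.
by rewrite sum1_card card_ord.
Qed.

Lemma rk_rel_of r x : rk (rel_of r) x = (r^-1)%g x.
Proof.
rewrite /rk -(card_lt_ord (ltnW (ltn_ord ((r^-1)%g x)))).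
have -> : [set y | (y, x) \in rel_of r] = (r^-1)%g @^-1: [set i : 'I_n | i < (r^-1)%g x].
  by apply/setP => y; rewrite !inE.
rewrite card_preimset; last exact: perm_inj.
by apply: eq_card => i; rewrite !inE.
Qed.

Lemma rel_of_inj r1 r2 : rel_of r1 = rel_of r2 -> r1 = r2.
Proof.
move=> e; apply: invg_inj; apply/permP => x; apply: val_inj.
by rewrite /= -!rk_rel_of e.
Qed.

Lemma rank_perm R : ranking R -> exists r : {perm 'I_n}, R = rel_of r.
Proof.
move=> rR; have /andP [/andP [ir tr] tt] := rR.
have rk_lt : forall x, rk R x < n.
  move=> x; rewrite -[n]card_ord; apply: proper_card; apply/properP; split.
    exact: subset_predT.
  by exists x => //; rewrite inE (negbTE (irrP ir x)).
have mono : forall x y, (x, y) \in R -> rk R x < rk R y.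
  move=> x y xy; apply: proper_card; apply/properP; split.
    by apply/subsetP => z; rewrite !inE => zx; exact: trP tr zx xy.
  by exists x; rewrite inE // (negbTE (irrP ir x)).
pose f x := Ordinal (rk_lt x).
have f_inj : injective f.
  move=> x y /(congr1 val) /= e; apply/eqP; apply: contraT => ne.
  by case/orP: (totP tt ne) => /mono; rewrite e ltnn.
exists ((perm f_inj)^-1)%g; apply/setP => [[x y]].
rewrite rel_of_mem invgK !permE /=; apply/idP/idP; first exact: mono.
move=> lt; have ne : x != y by apply: contraTneq lt => ->; rewrite ltnn.
case/orP: (totP tt ne) => // /mono; by rewrite ltnNge (ltnW lt).
Qed.

Lemma feasible_only_if R W : ranking R -> tournament W -> feasible W R ->
  exists r : {perm 'I_n}, R = rel_of r /\
    (forall i j : 'I_n, val j = (val i).+1 -> (r i, r j) \in W).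
Proof.
move=> rR tW [s [vs out]]; case: (rank_perm rR) => r eR; exists r; split => // i j e.
move: out; rewrite /outcome; set h := iter _ _ _ => eh.
have hW := iter_in_W (k := #|'I_n| * #|'I_n|) vs tW.
have hR : {subset h <= R} by move=> p hp; rewrite -eh; exact: sub_tcl.
have : (r i, r j) \in R by rewrite eR rel_ofE; move: e => /= ->.
rewrite -{1}eh mem_tcl => /existsP [z /andP [iz zj]].
have trR : transitiveb R by case/andP: rR => /andP [].
case: (conn_sub hR trR zj) => [ez|zj']; first by apply: hW; rewrite -ez.
exfalso; have := hR _ iz; rewrite eR rel_of_mem permK => lt1.
move: zj'; rewrite eR rel_of_mem permK => lt2.
move: e lt1 lt2 => /= e; lia.
Qed.

End Rank.

Lemma sum_bool_card (T : finType) (A : {set T}) (b : pred T) :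
  \sum_(x in A) (b x : nat) = #|[set x in A | b x]|.
Proof.
rewrite (eq_bigr (fun x => if b x then 1 else 0)); last by move=> x _; case: (b x).
rewrite -big_mkcondr sum1_card; apply: eq_card => x; by rewrite !inE.
Qed.

Lemma count_act (X G : finType) (act : G -> X -> X) (A : {set X}) (E : pred X) :
  (forall g, injective (act g)) -> (forall g x, x \in A -> act g x \in A) ->
  (forall x, x \in A -> exists g, E (act g x)) ->
  #|[set x in A | ~~ E x]| * #|G| <= #|A| * #|G|.-1.
Proof.
move=> inj pres ex.
have key : forall g, #|[set x in A | ~~ E (act g x)]| = #|[set x in A | ~~ E x]|.
  move=> g; rewrite -(card_imset _ (inj g)); apply: eq_card => y.
  have AA : act g @: A =i A.
    apply/subset_cardP; first by rewrite card_imset.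
    apply/subsetP => z /imsetP [x xA ->]; exact: pres.
  rewrite !inE; apply/imsetP/andP.
    by case=> x; rewrite inE => /andP [xA nE] ->; split => //; exact: pres.
  case=> yA nE; move: yA; rewrite -AA => /imsetP [x xA exy].
  by exists x => //; rewrite inE xA -exy.
have : \sum_(g : G) #|[set x in A | ~~ E (act g x)]| = #|[set x in A | ~~ E x]| * #|G|.
  rewrite (eq_bigr _ (fun g _ => key g)) sum_nat_const; exact: mulnC.
move=> <-.
rewrite (eq_bigr (fun g => \sum_(x in A) (~~ E (act g x) : nat))); last first.
  by move=> g _; rewrite sum_bool_card.
rewrite exchange_big /= -sum_nat_const; apply: leq_sum => x xA.
have := sum_bool_card [set: G] (fun g => ~~ E (act g x)).
rewrite (eq_bigl (fun _ => true)); last by move=> g; rewrite inE.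
move=> ->.
case: (ex x xA) => g Eg.
have : #|[set g0 in [set: G] | ~~ E (act g0 x)]| < #|G|.
  rewrite -cardsT; apply: proper_card; apply/properP; split; first exact: subsetT.
  by exists g; rewrite !inE // Eg.
by case: #|G| => // m; rewrite ltnS.
Qed.

Section Flip.
Variable T : finType.
Implicit Types (W : {set T * T}).

Definition flip (b : bool) (u v : T) W : {set T * T} :=
  [set p | if b && ((p == (u, v)) || (p == (v, u))) then p \notin W else p \in W].

Lemma flip_mem b u v W p :
  (p \in flip b u v W) = if b && ((p == (u, v)) || (p == (v, u))) then p \notin W else p \in W.
Proof. by rewrite inE. Qed.

Lemma flipK b u v : involutive (flip b u v).
Proof. by move=> W; apply/setP => p; rewrite !flip_mem; case: (b && _) => //=; rewrite negbK. Qed.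

Lemma flip_inj b u v : injective (flip b u v).
Proof. exact: inv_inj (flipK b u v). Qed.

Lemma flip_self b u v W : ((u, v) \in flip b u v W) = if b then (u, v) \notin W else (u, v) \in W.
Proof. by rewrite flip_mem eqxx /= andbT. Qed.

Lemma flip_other b u v W (x y : T) :
  (x != u) && (x != v) || (y != u) && (y != v) ->
  ((x, y) \in flip b u v W) = ((x, y) \in W).
Proof.
move=> H; rewrite flip_mem; case: ifP => // /andP [_]; rewrite !xpair_eqE.
by case/orP: H => /andP [/negbTE -> /negbTE ->]; rewrite ?andbF.
Qed.

Lemma csym (u v x y : T) :
  ((y, x) == (u, v)) || ((y, x) == (v, u)) = ((x, y) == (u, v)) || ((x, y) == (v, u)).
Proof. by rewrite !xpair_eqE orbC andbC [(x == v) && _]andbC. Qed.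

Lemma flip_tour b u v W : u != v -> tournament W -> tournament (flip b u v W).
Proof.
move=> uv /andP [tot asy]; apply/andP; split.
- apply/forallP=> x; apply/forallP=> y; apply/implyP=> ne; rewrite !flip_mem csym.
  case: (b && _) => /=; last by move: (totP tot ne); apply.
  by case: (boolP ((x, y) \in W)) => // /(asymP asy) ->.
- apply/forallP=> x; apply/forallP=> y; apply/implyP; rewrite !flip_mem csym.
  case E: (b && _) => /=; last exact: asymP asy x y.
  move: E => /andP [_ c].
  have ne : x != y.
    apply: contraTneq c => ->; rewrite !xpair_eqE.
    by apply/negP => /orP [] /andP [/eqP e1 /eqP e2]; move: uv; rewrite -e1 e2 eqxx.
  by rewrite negbK => nxy; case/orP: (totP tot ne) => //; rewrite (negbTE nxy).
Qed.

Lemma tpermE (x y z : T) : tperm x y z = if z == x then y else if z == y then x else z.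
Proof.
case: tpermP => [->|->|/eqP/negbTE -> /eqP/negbTE ->]; rewrite ?eqxx //.
by case: eqP => // ->.
Qed.

Lemma min3 (P : {set T * T}) (y0 y1 y2 : T) : ranking P ->
  y0 != y1 -> y0 != y2 -> y1 != y2 ->
  [\/ ((y1, y0) \in P) && ((y2, y0) \in P), ((y0, y1) \in P) && ((y2, y1) \in P)
    | ((y0, y2) \in P) && ((y1, y2) \in P)].
Proof.
move=> rP n01 n02 n12; have /andP [/andP [_ tr] tt] := rP.
have asy := ranking_asym rP.
case/orP: (totP tt n01) => h01; case/orP: (totP tt n02) => h02; case/orP: (totP tt n12) => h12.
all: try by [constructor 1; rewrite ?h01 ?h02 ?h12 | constructor 2; rewrite ?h01 ?h02 ?h12
            | constructor 3; rewrite ?h01 ?h02 ?h12].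
- by have := asy _ _ (trP tr h01 h12); rewrite h02.
- by have := asy _ _ (trP tr h12 h01); rewrite h02.
Qed.

End Flip.

Section Block.
Variable n : nat.
Notation T := ('I_n.+1).
Variable pref : {set T * T}.
Hypothesis rpref : ranking pref.

Definition pos (k : nat) : T := inord k.

Lemma posK k : k <= n -> val (pos k) = k.
Proof. by move=> kn; rewrite /pos /= inordK. Qed.

Lemma pos_eq a b : a <= n -> b <= n -> (pos a == pos b) = (a == b).
Proof. by move=> an bn; rewrite -val_eqE /= !posK. Qed.

Lemma ord_pos (i : T) k : k <= n -> (i == pos k) = (val i == k).
Proof. by move=> kn; rewrite -val_eqE /= posK. Qed.

Definition X0 : {set {perm T} * {set T * T}} :=
  [set x | tournament x.2 && [forall i : T, forall j : T, (val j == (val i).+1) ==> ((i, j) \in x.2)]].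

Definition Ev (j : nat) (x : {perm T} * {set T * T}) : bool :=
  [&& (x.1 (pos (5*j+2)), x.1 (pos (5*j+1))) \in pref,
      (x.1 (pos (5*j+3)), x.1 (pos (5*j+1))) \in pref,
      (pos (5*j), pos (5*j+2)) \in x.2,
      (pos (5*j+3), pos (5*j+1)) \in x.2 &
      (pos (5*j+1), pos (5*j+4)) \in x.2].

Definition act (j : nat) (g : 'I_3 * bool * bool * bool) (x : {perm T} * {set T * T}) :=
  ((tperm (pos (5*j+1)) (pos (5*j+1+g.1.1.1)) * x.1)%g,
   flip g.1.1.2 (pos (5*j)) (pos (5*j+2))
     (flip g.1.2 (pos (5*j+3)) (pos (5*j+1)) (flip g.2 (pos (5*j+1)) (pos (5*j+4)) x.2))).

Fixpoint Afix (j : nat) : {set {perm T} * {set T * T}} :=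
  if j is j'.+1 then [set x in Afix j' | ~~ Ev j' x] else X0.

Lemma Afix_mem j x : (x \in Afix j) = (x \in X0) && [forall i : 'I_j, ~~ Ev i x].
Proof.
elim: j => [|j IH] /=; first by case: (x \in X0) => //=; apply/esym/forallP => [[]].
rewrite inE IH -andbA; congr (_ && _); apply/andP/forallP.
  by case=> /forallP H E [i /=]; rewrite ltnS leq_eqVlt => /orP [/eqP -> //|lt]; exact: (H (Ordinal lt)).
move=> H; split; last exact: (H ord_max).
by apply/forallP => i; exact: (H (widen_ord (leqnSn j) i)).
Qed.

Lemma act_inj j g : injective (act j g).
Proof.
move=> [r1 W1] [r2 W2] [/mulgI e1 /flip_inj /flip_inj /flip_inj e2].
by rewrite e1 e2.
Qed.

Lemma act_r j (k : 'I_3) (r : {perm T}) (p : T) : val p < 5 * j + 1 -> 5 * j + 3 <= n ->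
  (tperm (pos (5*j+1)) (pos (5*j+1+k)) * r)%g p = r p.
Proof.
move=> lt jn; have kl := ltn_ord k.
have v1 : val (pos (5*j+1)) = 5*j+1 by rewrite posK //; lia.
have v2 : val (pos (5*j+1+k)) = 5*j+1+k by rewrite posK //; lia.
rewrite permM tpermD //; apply/eqP => e; move: lt; rewrite -e ?v1 ?v2; lia.
Qed.


Lemma act_W j g x (a b : T) : val a < 5 * j -> 5 * j + 4 <= n ->
  ((a, b) \in (act j g x).2) = ((a, b) \in x.2).
Proof.
move=> lt jn; rewrite /act /= !flip_other //.
all: rewrite ?ord_pos; lia.
Qed.

Lemma act_path j g x (a b : T) : val b = (val a).+1 -> 5 * j + 4 <= n ->
  ((a, b) \in (act j g x).2) = ((a, b) \in x.2).
Proof.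
move=> e jn; rewrite /act /= !flip_other //.
all: rewrite ?ord_pos; lia.
Qed.

Lemma act_X0 j g x : 5 * j + 4 <= n -> x \in X0 -> act j g x \in X0.
Proof.
move=> jn; rewrite !inE => /andP [tW /forallP P]; apply/andP; split.
  rewrite /act /=; apply: flip_tour; first (rewrite pos_eq; lia).
  apply: flip_tour; first (rewrite pos_eq; lia).
  apply: flip_tour => //; rewrite pos_eq; lia.
apply/forallP => a; apply/forallP => b; apply/implyP => /eqP e.
rewrite act_path //; move: (P a) => /forallP /(_ b) /implyP; apply; exact/eqP.
Qed.

Lemma act_Ev i j g x : i < j -> 5 * j + 4 <= n -> Ev i (act j g x) = Ev i x.
Proof.
move=> ij jn; rewrite /Ev.
have lt : forall t, t <= 4 -> val (pos (5 * i + t)) < 5 * j.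
  by move=> t t4; rewrite posK; lia.
have l0 : val (pos (5 * i)) < 5 * j by rewrite -[5 * i]addn0; exact: lt.
have l1 := lt 1 isT; have l2 := lt 2 isT; have l3 := lt 3 isT.
have jn3 : 5 * j + 3 <= n by lia.
rewrite /= (act_r _ _ (ltn_addr 1 l1) jn3) (act_r _ _ (ltn_addr 1 l2) jn3) (act_r _ _ (ltn_addr 1 l3) jn3).
by rewrite (act_W _ _ _ l0 jn) (act_W _ _ _ l3 jn) (act_W _ _ _ l1 jn).
Qed.

Lemma Afix_act j g x : 5 * j + 4 <= n -> x \in Afix j -> act j g x \in Afix j.
Proof.
move=> jn; rewrite !Afix_mem => /andP [x0 /forallP H]; rewrite act_X0 //=.
by apply/forallP => i; rewrite act_Ev ?ltn_ord //; exact: H.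
Qed.


Lemma bits j x (k : 'I_3) : 5 * j + 4 <= n ->
  ((tperm (pos (5*j+1)) (pos (5*j+1+k)) * x.1)%g (pos (5*j+2)),
   (tperm (pos (5*j+1)) (pos (5*j+1+k)) * x.1)%g (pos (5*j+1))) \in pref ->
  ((tperm (pos (5*j+1)) (pos (5*j+1+k)) * x.1)%g (pos (5*j+3)),
   (tperm (pos (5*j+1)) (pos (5*j+1+k)) * x.1)%g (pos (5*j+1))) \in pref ->
  exists g, Ev j (act j g x).
Proof.
move=> jn h1 h2.
exists (k, (pos (5*j), pos (5*j+2)) \notin x.2, (pos (5*j+3), pos (5*j+1)) \notin x.2,
  (pos (5*j+1), pos (5*j+4)) \notin x.2).
rewrite /Ev /act /=; apply/and5P; split => //.
{ rewrite flip_self !flip_other; first by case: (_ \in x.2).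
  all: rewrite ?pos_eq; lia. }
{ rewrite flip_other; last by rewrite ?pos_eq; lia.
  rewrite flip_self flip_other; first by case: (_ \in x.2).
  all: rewrite ?pos_eq; lia. }
rewrite flip_other; last by rewrite ?pos_eq; lia.
rewrite flip_other; last by rewrite ?pos_eq; lia.
by rewrite flip_self; case: (_ \in x.2).
Qed.

Lemma act_ex j x : 5 * j + 4 <= n -> exists g, Ev j (act j g x).
Proof.
move=> jn; set r := x.1.
have d : forall a b, a <= n -> b <= n -> a != b -> r (pos a) != r (pos b).
  by move=> a b an bn ab; apply: contra ab => /eqP /perm_inj /eqP; rewrite pos_eq.
have n12 : pos (5*j+1) != pos (5*j+2) by rewrite pos_eq; lia.
have n13 : pos (5*j+1) != pos (5*j+3) by rewrite pos_eq; lia.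
have n23 : pos (5*j+2) != pos (5*j+3) by rewrite pos_eq; lia.
case: (min3 rpref (d (5*j+1) (5*j+2) _ _ _) (d (5*j+1) (5*j+3) _ _ _) (d (5*j+2) (5*j+3) _ _ _));
  try lia.
- case/andP => H1 H2; apply: (bits (k := Ordinal (isT : 0 < 3))) => //=;
  by rewrite addn0 tperm1 mul1g.
- case/andP => H1 H2; apply: (bits (k := Ordinal (isT : 1 < 3))) => //=;
  rewrite -addnA /= !permM ?tpermL ?tpermR ?tpermD //; by rewrite eq_sym.
- case/andP => H1 H2; apply: (bits (k := Ordinal (isT : 2 < 3))) => //=;
  have -> : 5 * j + 1 + 2 = 5 * j + 3 by lia.
  all: rewrite !permM ?tpermL ?tpermR ?tpermD //; by rewrite eq_sym.
Qed.


Definition sv j v := if v == 5*j+1 then 5*j+2 else if v == 5*j+2 then 5*j+3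
  else if v == 5*j+3 then 5*j+1 else v.

Lemma sv_inv j a b : a < b -> sv j b < sv j a -> (b == 5*j+3) && ((a == 5*j+1) || (a == 5*j+2)).
Proof. rewrite /sv => lt; repeat case: ifP; move=> *; lia. Qed.

Lemma sv0 j : sv j (5*j) = 5*j. Proof. rewrite /sv; repeat case: ifP; lia. Qed.
Lemma sv1 j : sv j (5*j+1) = 5*j+2. Proof. rewrite /sv; repeat case: ifP; lia. Qed.
Lemma sv2 j : sv j (5*j+2) = 5*j+3. Proof. rewrite /sv; repeat case: ifP; lia. Qed.
Lemma sv3 j : sv j (5*j+3) = 5*j+1. Proof. rewrite /sv; repeat case: ifP; lia. Qed.
Lemma sv4 j : sv j (5*j+4) = 5*j+4. Proof. rewrite /sv; repeat case: ifP; lia. Qed.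
Lemma svo j v : v != 5*j+1 -> v != 5*j+2 -> v != 5*j+3 -> sv j v = v.
Proof. rewrite /sv => h1 h2 h3; repeat case: ifP; lia. Qed.
Lemma svS j v : v != 5*j -> v != 5*j+1 -> v != 5*j+2 -> sv j v.+1 = v.+1.
Proof. rewrite /sv => h1 h2 h3; repeat case: ifP; lia. Qed.
Lemma addn_S m t : m + t.+1 = (m + t).+1. Proof. by rewrite addnS. Qed.

Definition Psi (x : {perm T} * {set T * T}) :=
  (rel_of x.1, [set q | ((x.1^-1)%g q.1, (x.1^-1)%g q.2) \in x.2]).

Definition sig j : {perm T} := (tperm (pos (5*j+2)) (pos (5*j+3)) * tperm (pos (5*j+1)) (pos (5*j+2)))%g.

Lemma sig_val j (a : T) : 5 * j + 4 <= n -> val (sig j a) = sv j (val a).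
Proof.
move=> jn; rewrite /sig permM !tpermE /sv !ord_pos; try lia.
have p1 : val (pos (5*j+1)) = 5*j+1 by rewrite posK; lia.
have p2 : val (pos (5*j+2)) = 5*j+2 by rewrite posK; lia.
have p3 : val (pos (5*j+3)) = 5*j+3 by rewrite posK; lia.
repeat case: ifP; rewrite ?ord_pos ?p1 ?p2 ?p3; try lia; by move=> *; try lia.
Qed.

Lemma improve j x : 5 * j + 4 <= n -> x \in X0 -> Ev j x ->
  ~ unimprovable pref (Psi x).2 (Psi x).1.
Proof.
move=> jn hx hE H; apply: H.
move: hx; rewrite inE => /andP [tW /forallP hP].
have path : forall a b : T, val b = (val a).+1 -> (a, b) \in x.2.
  by move=> a b e; move: (hP a) => /forallP /(_ b) /implyP; apply; apply/eqP.
case/and5P: hE => e1 e2 e3 e4 e5.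
set r := x.1.
have pv : forall t, t <= 4 -> val (pos (5*j+t)) = 5*j+t by move=> t t4; rewrite posK; lia.
have ep : forall (a : T) t, t <= 4 -> val a = 5*j+t -> a = pos (5*j+t).
  by move=> a t t4 e; apply: val_inj; rewrite e pv.
exists (rel_of (sig j * r)%g); split; [|split].
- move/rel_of_inj => e.
  have e' : sig j = 1%g by apply: (mulIg r); rewrite mul1g; exact: e.
  have : val (sig j (pos (5*j+1))) = val (pos (5*j+1)) by rewrite e' perm1.
  rewrite sig_val // pv // /sv eqxx; lia.
- apply: (feasible_if ord0) => a b e; rewrite inE /= (permM (sig j) r a) (permM (sig j) r b) !permK.
  have sa := sig_val a jn; have sb := sig_val b jn.
  have [a0|a0] := eqVneq (val a) (5*j).
    have b1 : val b = 5*j+1 by rewrite e a0 addn1.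
    have -> : sig j a = a by apply: val_inj; rewrite sa a0 sv0.
    have -> : sig j b = pos (5*j+2) by apply: ep => //; rewrite sb b1 sv1.
    have -> : a = pos (5*j) by rewrite -[5*j]addn0; apply: ep => //; rewrite a0 addn0.
    exact: e3.
  have [a1|a1] := eqVneq (val a) (5*j+1).
    have b1 : val b = 5*j+2 by rewrite e a1 -addn_S.
    have -> : sig j a = pos (5*j+2) by apply: ep => //; rewrite sa a1 sv1.
    have -> : sig j b = pos (5*j+3) by apply: ep => //; rewrite sb b1 sv2.
    by apply: path; rewrite !pv // -addn_S.
  have [a2|a2] := eqVneq (val a) (5*j+2).
    have b1 : val b = 5*j+3 by rewrite e a2 -addn_S.
    have -> : sig j a = pos (5*j+3) by apply: ep => //; rewrite sa a2 sv2.
    have -> : sig j b = pos (5*j+1) by apply: ep => //; rewrite sb b1 sv3.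
    exact: e4.
  have [a3|a3] := eqVneq (val a) (5*j+3).
    have b1 : val b = 5*j+4 by rewrite e a3 -addn_S.
    have -> : sig j a = pos (5*j+1) by apply: ep => //; rewrite sa a3 sv3.
    have -> : sig j b = pos (5*j+4) by apply: ep => //; rewrite sb b1 sv4.
    exact: e5.
  have -> : sig j a = a by apply: val_inj; rewrite sa svo.
  have -> : sig j b = b by apply: val_inj; rewrite sb e svS.
  exact: path.
- move=> u v hp hR; apply/negP => /negP nR.
  have ne : u != v by apply: contraTneq hR => ->; rewrite rel_of_mem ltnn.
  have := totP (proj2 (andP (rel_of_ranking (sig j * r)%g))) ne; rewrite (negbTE nR) /= rel_of_mem => lt.
  move: hR; rewrite rel_of_mem.
  set a := (((sig j * r)%g)^-1)%g v; set b := (((sig j * r)%g)^-1)%g u.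
  have ev : v = r (sig j a) by rewrite -permM /a permKV.
  have eu : u = r (sig j b) by rewrite -permM /b permKV.
  rewrite ev eu !permK => lt2.
  move: lt2; rewrite !sig_val // => lt2; have /andP [/eqP hb0 ha0] := sv_inv lt lt2.
  have hb : val b = 5*j+3 := hb0.
  have ha : (val a == 5*j+1) || (val a == 5*j+2) := ha0.
  have sb1 : sig j b = pos (5*j+1) by apply: ep => //; rewrite sig_val // hb sv3.
  have := ranking_asym rpref; move: hp; rewrite eu ev sb1.
  case/orP: ha => /eqP ha.
    have -> : sig j a = pos (5*j+2) by apply: ep => //; rewrite sig_val // ha sv1.
    by move=> hp /(_ _ _ e1); rewrite hp.
  have -> : sig j a = pos (5*j+3) by apply: ep => //; rewrite sig_val // ha sv2.
  by move=> hp /(_ _ _ e2); rewrite hp.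
Qed.

End Block.

Lemma preim_tour (T : finType) (r : {perm T}) (W : {set T * T}) :
  tournament W -> tournament [set q | (r q.1, r q.2) \in W].
Proof.
case/andP => tot asy; apply/andP; split.
  apply/forallP => x; apply/forallP => y; apply/implyP => ne; rewrite !inE /=.
  have ne' : r x != r y by apply: contra ne => /eqP /perm_inj ->.
  by move: (totP tot ne').
apply/forallP => x; apply/forallP => y; apply/implyP; rewrite !inE /=.
by move=> h; apply: (asymP asy h).
Qed.

Lemma bern (m : nat) : 23 ^ m * (23 + m) <= 23 * 24 ^ m.
Proof. elim: m => [|m IH] //; rewrite !expnS; nia. Qed.

Section Main.
Variable n : nat.
Notation T := ('I_n.+1).
Variable pref : {set T * T}.
Hypothesis rpref : ranking pref.

Lemma count_main j : 5 * j <= n.+1 -> #|Afix pref j| * 24 ^ j <= #|X0 n| * 23 ^ j.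
Proof.
elim: j => [|j IH] jn; first by rewrite !expn0 !muln1.
have jn' : 5 * j + 4 <= n by lia.
have := count_act (act := @act n j) (A := Afix pref j) (E := Ev pref j)
  (@act_inj n j) (fun g x => Afix_act rpref g jn') (fun x _ => act_ex rpref x jn').
rewrite !card_prod !card_ord card_bool /=.
have IH' := IH (leq_trans (leq_addr 5 _) (leq_trans (eq_leq (esym (mulnSr 5 j))) jn)).
move: IH'; set a := #|Afix pref j|; set b := #|[set x in Afix pref j | ~~ Ev pref j x]|.
rewrite !expnS => h1 h2; have h2' : b * 24 <= a * 23 := h2.
move: h1 h2'; clear; move: (24 ^ j) (23 ^ j) a b #|X0 n| => p q a b c h1 h2.
have h3 : b * 24 * p <= a * 23 * p by rewrite leq_mul2r h2 orbT.
nia.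
Qed.

Definition NumS := [set p : {set T * T} * {set T * T} |
  [&& ranking p.1, tournament p.2, Defs.decP (feasible p.2 p.1)
    & Defs.decP (unimprovable pref p.2 p.1)]].
Definition DenS := [set p : {set T * T} * {set T * T} |
  [&& ranking p.1, tournament p.2 & Defs.decP (feasible p.2 p.1)]].

Lemma num_le m : 5 * m <= n.+1 -> #|NumS| <= #|Afix pref m|.
Proof.
move=> mn; apply: leq_trans (leq_imset_card (@Psi n) _).
apply: subset_leq_card; apply/subsetP => [[R W]]; rewrite inE /= => /and4P [rR tW /decPE fR /decPE uR].
case: (feasible_only_if rR tW fR) => r [eR path].
apply/imsetP; exists (r, [set q | (r q.1, r q.2) \in W]); last first.
  rewrite /Psi /= -eR; congr (_, _); apply/setP => [[a b]]; by rewrite !inE /= !permKV.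
rewrite Afix_mem; apply/andP; split.
  rewrite inE /= preim_tour //=; apply/forallP => a; apply/forallP => b; apply/implyP => /eqP e.
  by rewrite inE /= path.
apply/forallP => i; apply/negP => E.
have im : 5 * i + 4 <= n by have := ltn_ord i; lia.
apply: (improve rpref im _ E).
  rewrite inE /= preim_tour //=; apply/forallP => a; apply/forallP => b; apply/implyP => /eqP e.
  by rewrite inE /= path.
have -> : Psi (r, [set q | (r q.1, r q.2) \in W]) = (R, W).
  rewrite /Psi /= -eR; congr (_, _); apply/setP => [[a b]]; by rewrite !inE /= !permKV.
exact: uR.
Qed.

Lemma den_ge : #|X0 n| <= #|DenS|.
Proof.
have inj : injective (@Psi n).
  move=> [r1 W1] [r2 W2] [/rel_of_inj e1 e2]; move: e2; rewrite -e1 => /setP e2.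
  congr (_, _); apply/setP => [[a b]]; have := e2 (r1 a, r1 b).
  by rewrite !inE /= !permK.
rewrite -(card_imset _ inj); apply: subset_leq_card; apply/subsetP => d /imsetP [[r W] hx ->].
move: hx; rewrite inE /= => /andP [tW /forallP P].
rewrite inE /= rel_of_ranking /=; apply/andP; split.
  exact: (preim_tour (r^-1)%g tW).
apply/decPE; apply: (feasible_if ord0) => a b e; rewrite inE /= !permK.
by move: (P a) => /forallP /(_ b) /implyP; apply; apply/eqP.
Qed.

End Main.

Lemma final_nat (Num A X Den K m P Q : nat) : 0 < P ->
  Num <= A -> A * P <= X * Q -> X <= Den -> Q * (23 + m) <= 23 * P -> 23 * K <= m ->
  Num * K <= Den.
Proof.
move=> Pp h1 h2 h3 h4 h5.
have s1 : Num * P <= X * Q by apply: leq_trans h2; rewrite leq_mul2r h1 orbT.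
have t1 : Num * P * (23 + m) <= X * Q * (23 + m) := leq_mul s1 (leqnn _).
have t2 : X * (Q * (23 + m)) <= X * (23 * P) := leq_mul (leqnn X) h4.
have s2 : Num * (23 + m) * P <= 23 * X * P by lia.
rewrite leq_pmul2r // in s2.
have s4 : Num * K * 23 <= Num * (23 + m) by rewrite -mulnA leq_mul2l (leq_trans _ (leq_addl 23 m)) ?orbT // mulnC.
have : Num * K * 23 <= Den * 23 by apply: (leq_trans s4); apply: (leq_trans s2); rewrite mulnC leq_mul2r h3 orbT.
by rewrite leq_pmul2r.
Qed.

Local Open Scope ring_scope.

Lemma exK (eps : rat) : 0 < eps -> exists K : nat, 1 < eps * K%:R.
Proof.
move=> ep; have ie : 0 <= eps^-1 by rewrite invr_ge0 ltW.
have := archi_boundP ie; set K := Num.bound _ => h; exists K.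
by rewrite -ltr_pdivrMl // mulr1.
Qed.

Lemma ratfin (a b K : nat) (eps : rat) : 0 < eps -> 1 < eps * K%:R -> (a * K <= b)%N -> a%:R / b%:R < eps.
Proof.
move=> ep eK abK; case: (posnP b) => [->|bp]; first by rewrite invr0 mulr0.
have Kp : (0 < K)%N by case: K eK abK => //; rewrite mulr0 ltr10.
rewrite ltr_pdivrMr ?ltr0n //.
have h1 : a%:R <= b%:R / K%:R :> rat by rewrite ler_pdivlMr ?ltr0n // -natrM ler_nat.
apply: (le_lt_trans h1); rewrite ltr_pdivrMr ?ltr0n // -mulrA mulrC.
by rewrite -mulrA ltr_pMr ?ltr0n // mulrC.
Qed.

Unset Implicit Arguments.

Theorem proposition7 (pref : forall n : nat, {set 'I_n * 'I_n})
  (hpref : forall n : nat, ranking (pref n)) :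
  forall eps : rat, 0 < eps ->
  exists N : nat, forall n : nat, (N <= n)%N -> cond_prob (pref n) < eps.
Proof.
move=> eps ep; case: (exK ep) => K hK.
exists (5 * (23 * K) + 5)%N => nn hn.
case: nn hn => [|n] hn; first by move: hn; rewrite addnS.
pose m := (n.+1 %/ 5)%N.
have mn : (5 * m <= n.+1)%N by rewrite /m mulnC leq_divM.
have mK : (23 * K <= m)%N.
  rewrite /m; apply: (@leq_trans ((5 * (23 * K) + 5) %/ 5)); last exact: leq_div2r.
  have -> : (5 * (23 * K) + 5 = 5 * (23 * K).+1)%N by rewrite mulnS addnC.
  by rewrite mulKn.
rewrite /cond_prob; apply: (ratfin ep hK).
apply: (final_nat (A := #|Afix (pref n.+1) m|) (X := #|X0 n|) (P := (24 ^ m)%N) (Q := (23 ^ m)%N) (m := m)).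
- by rewrite expn_gt0.
- exact: (num_le (hpref n.+1) mn).
- exact: (count_main (hpref n.+1) mn).
- exact: (den_ge n).
- exact: bern.
- exact: mK.
Qed.
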